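(* Let $d$ be a (possibly extended) $K$-quasi-metric on $X$ and let $o\in X$ be a point other than the point at infinity $\infty$ of $d$. Let $d_o$ be the involution of $d$ at $o$. Then $\dim_N(X,d)=\dim_N(X,d_o)$.
   Context: A $K$-quasi-metric ($K\ge1$) is a symmetric map $d:X\times X\to[0,\infty)$ with $d(x,y)=0\iff x=y$ and $d(x,y)\le K\max(d(x,z),d(z,y))$; an extended one has exactly one point $\infty\in X$ with $d(x,\infty)=\infty$ for $x\ne\infty$, all other distances finite. The involution at $o\ne\infty$: $d_o(x,x)=0$, $d_o(x,y)=\frac{d(x,y)}{d(x,o)d(o,y)}$ for distinct $x,y\ne\infty$, $d_o(\infty,y)=1/d(o,y)$, $d_o(x,\infty)=1/d(x,o)$ for distinct points, with $\lambda/0=\infty$ for $\lambda>0$ (so $o$ is the point at infinity of $d_o$). Nagata dimension of a (possibly extended) quasi-metric space $(X,\rho)$ with point at infinity $\infty$ (if any): diameters taken w.r.t. $\rho$. A cover $\mathcal B$ of $X\setminus\{\infty\}$ is $C$-bounded if each $B\in\mathcal B$ has $\mathrm{diam}(B)\le C$. A family $\mathcal B$ has $s$-multiplicity $\le m$ if every $U\subset X$ with $\mathrm{diam}(U)\le s$ meets at most $m$ members of $\mathcal B$. $\dim_N(X,\rho)$ is the infimum of all $n$ for which there is $c>0$ such that for every $s>0$ there is a $cs$-bounded cover of $X\setminus\{\infty\}$ with $s$-multiplicity $\le n+1$. *)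

(* Defs.v *)
From Stdlib Require Import Reals List Classical ClassicalEpsilon.
From Coquelicot Require Import Coquelicot.
Open Scope R_scope.

Definition dec (P : Prop) : bool :=
  if excluded_middle_informative P then true else false.

Definition rbar_max (a b : Rbar) : Rbar := if dec (Rbar_le a b) then b else a.

(* A (possibly extended) K-quasi-metric on X.  [pinf = Some i] means the
   space is extended with point at infinity i; [pinf = None] means ordinary. *)
Definition is_quasi_metric {X : Type} (K : R) (d : X -> X -> Rbar)
  (pinf : option X) : Prop :=
  1 <= K /\
  (forall x y, Rbar_le (Finite 0) (d x y)) /\
  (forall x y, d x y = d y x) /\
  (forall x y, d x y = Finite 0 <-> x = y) /\
  (forall x y z, Rbar_le (d x y) (Rbar_mult (Finite K) (rbar_max (d x z) (d z y)))) /\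
  (forall x y, d x y = p_infty <->
      (exists i, pinf = Some i /\ x <> y /\ (x = i \/ y = i))).

Definition qdiv (a b : R) : Rbar :=
  if Req_EM_T b 0 then p_infty else Finite (a / b).

(* involution of d at o; its point at infinity is o *)
Definition involution {X : Type} (d : X -> X -> Rbar) (pinf : option X) (o : X)
  (x y : X) : Rbar :=
  if dec (x = y) then Finite 0
  else if dec (pinf = Some x) then qdiv 1 (real (d o y))
  else if dec (pinf = Some y) then qdiv 1 (real (d x o))
  else qdiv (real (d x y)) (real (d x o) * real (d o y)).

Definition diam_le {X : Type} (rho : X -> X -> Rbar) (U : X -> Prop) (C : R) : Prop :=
  forall x y, U x -> U y -> Rbar_le (rho x y) (Finite C).

Definition at_most {X : Type} (m : nat) (P : (X -> Prop) -> Prop) : Prop :=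
  forall l : list (X -> Prop), NoDup l -> (forall b, In b l -> P b) ->
    (length l <= m)%nat.

Definition bounded_cover {X : Type} (rho : X -> X -> Rbar) (pinf : option X)
  (C : R) (B : (X -> Prop) -> Prop) : Prop :=
  (forall b, B b -> (forall x, b x -> pinf <> Some x) /\ diam_le rho b C) /\
  (forall x, pinf <> Some x -> exists b, B b /\ b x).

Definition multiplicity_le {X : Type} (rho : X -> X -> Rbar)
  (B : (X -> Prop) -> Prop) (s : R) (m : nat) : Prop :=
  forall U : X -> Prop, diam_le rho U s ->
    at_most m (fun b => B b /\ exists x, b x /\ U x).

Definition nagata_admissible {X : Type} (rho : X -> X -> Rbar) (pinf : option X)
  (n : nat) : Prop :=
  exists c, 0 < c /\ forall s, 0 < s ->
    exists B, bounded_cover rho pinf (c * s) B /\ multiplicity_le rho B s (S n).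

Definition nagata_dim {X : Type} (rho : X -> X -> Rbar) (pinf : option X) : Rbar :=
  Glb_Rbar (fun r => exists n : nat, r = INR n /\ nagata_admissible rho pinf n).

(* Main.v *)
Require Import Defs.
From Stdlib Require Import Reals List Classical ClassicalEpsilon.
From Coquelicot Require Import Coquelicot.
Open Scope R_scope.
From Stdlib Require Import Lra Lia.

Lemma transfer_list {A B : Type} (f : A -> B) (P : A -> Prop) (l : list B) :
  (forall y, In y l -> exists x, P x /\ y = f x) ->
  exists l', l = map f l' /\ (forall x, In x l' -> P x).
Proof.
  induction l as [|y l IH]; intros H.
  - exists nil; split; [reflexivity | intros x []].
  - destruct IH as [l' [E HP]]. { intros z Hz; apply H; right; exact Hz. }
    destruct (H y (or_introl eq_refl)) as [x [Px Ex]].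
    exists (x :: l'); split.
    + simpl; rewrite <- E, <- Ex; reflexivity.
    + intros z [<-|Hz]; auto.
Qed.

Lemma at_most_transfer {Y X : Type} (f : (Y -> Prop) -> (X -> Prop)) (P : (Y -> Prop) -> Prop) (m : nat) (l : list (X -> Prop)) :
  at_most m P -> NoDup l ->
  (forall y, In y l -> exists x, P x /\ y = f x) -> (length l <= m)%nat.
Proof.
  intros Ham Hnd H.
  destruct (transfer_list f P l H) as [l' [E HP]]; subst l.
  rewrite length_map. apply Ham; auto.
  eapply NoDup_map_inv; eauto.
Qed.

Lemma le_fin (x : Rbar) (a b : R) : Rbar_le x (Finite a) -> a <= b -> Rbar_le x (Finite b).
Proof. destruct x; simpl; intros; try lra; auto. Qed.

Lemma qt_same {Z : Type} (t : Z -> Z -> Rbar) (K : R)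
  (Hqt : forall x y z a b, Rbar_le (t x z) (Finite a) -> Rbar_le (t z y) (Finite b) ->
          Rbar_le (t x y) (Finite (K * Rmax a b))) :
  forall x y z a, Rbar_le (t x z) (Finite a) -> Rbar_le (t z y) (Finite a) ->
          Rbar_le (t x y) (Finite (K * a)).
Proof.
  intros x y z a H1 H2. generalize (Hqt x y z a a H1 H2).
  rewrite Rmax_left; [auto|lra].
Qed.

Definition absorbed {Z : Type} (t : Z -> Z -> Rbar) (Cfam : (Z -> Prop) -> Prop) (r : R)
  (D : Z -> Prop) : Prop :=
  exists p b C, D p /\ Cfam C /\ C b /\ Rbar_le (t p b) (Finite r).

Definition Cof {Z : Type} (t : Z -> Z -> Rbar) (Cfam : (Z -> Prop) -> Prop) (r : R)
  (D : Z -> Prop) : Z -> Prop :=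
  epsilon (inhabits (fun _ : Z => False))
    (fun C => Cfam C /\ exists p b, D p /\ C b /\ Rbar_le (t p b) (Finite r)).

Lemma Cof_spec {Z : Type} (t : Z -> Z -> Rbar) Cfam r D :
  absorbed t Cfam r D ->
  Cfam (Cof t Cfam r D) /\ exists p b, D p /\ Cof t Cfam r D b /\ Rbar_le (t p b) (Finite r).
Proof.
  intros [p [b [C [Dp [HC [Cb H]]]]]]. unfold Cof. apply epsilon_spec.
  exists C. split; auto. exists p, b; auto.
Qed.

Definition Cp {Z : Type} (t : Z -> Z -> Rbar) (Dfam Cfam : (Z -> Prop) -> Prop) (r : R)
  (C : Z -> Prop) : Z -> Prop :=
  fun x => C x \/ exists D, Dfam D /\ absorbed t Cfam r D /\ Cof t Cfam r D = C /\ D x.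

Definition Nfam {Z : Type} (t : Z -> Z -> Rbar) (Dfam Cfam : (Z -> Prop) -> Prop) (r : R)
  (M : Z -> Prop) : Prop :=
  (exists C, Cfam C /\ M = Cp t Dfam Cfam r C) \/
  (exists D, Dfam D /\ ~ absorbed t Cfam r D /\ M = D).

Definition gmap {Z : Type} (t : Z -> Z -> Rbar) (Dfam Cfam : (Z -> Prop) -> Prop) (r : R)
  (D : Z -> Prop) : Z -> Prop :=
  match excluded_middle_informative (absorbed t Cfam r D) with
  | left _ => Cp t Dfam Cfam r (Cof t Cfam r D)
  | right _ => D
  end.

Lemma Kw (K a : R) : 1 <= K -> 0 <= a -> a <= K * a.
Proof. intros; nra. Qed.

Lemma union_lemma {Z : Type} (t : Z -> Z -> Rbar) (pinf : option Z) (K : R) (m : nat)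
  (HK : 1 <= K) (Hsym : forall x y, t x y = t y x)
  (Hqt : forall x y z a b, Rbar_le (t x z) (Finite a) -> Rbar_le (t z y) (Finite b) ->
          Rbar_le (t x y) (Finite (K * Rmax a b)))
  (A B : Z -> Prop) (HAB : forall x, pinf <> Some x -> A x \/ B x)
  (s s' c1 c2 : R) (Hs : 0 < s) (Hc1 : 0 <= c1)
  (Hs' : K * (K * (K * Rmax s (c1 * s))) <= s')
  (Dfam Cfam : (Z -> Prop) -> Prop)
  (HD1 : forall D, Dfam D -> (forall x, D x -> pinf <> Some x) /\ diam_le t D (c1 * s))
  (HD2 : forall x, A x -> exists D, Dfam D /\ D x)
  (HC1 : forall C, Cfam C -> (forall x, C x -> pinf <> Some x) /\ diam_le t C (c2 * s'))
  (HC2 : forall x, B x -> exists C, Cfam C /\ C x)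
  (HDm : multiplicity_le t Dfam s m) (HCm : multiplicity_le t Cfam s' m) :
  exists N, bounded_cover t pinf (K * (K * (K * Rmax (Rmax (c1 * s) s) (c2 * s')))) N
         /\ multiplicity_le t N s m.
Proof.
  pose proof (qt_same t K Hqt) as Q.
  set (M0 := Rmax (Rmax (c1 * s) s) (c2 * s')).
  assert (HM0a : c1 * s <= M0) by (unfold M0; eauto using Rle_trans, Rmax_l).
  assert (HM0b : s <= M0) by (unfold M0; eapply Rle_trans; [apply Rmax_r|apply Rmax_l]).
  assert (HM0c : c2 * s' <= M0) by (unfold M0; apply Rmax_r).
  assert (HM0 : 0 <= M0) by lra.
  assert (HK1 : M0 <= K * M0) by (apply Kw; lra).
  assert (HK2 : K * M0 <= K * (K * M0)) by (apply Kw; nra).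
  assert (HK3 : K * (K * M0) <= K * (K * (K * M0))) by (apply Kw; nra).
  assert (cross : forall C D x y, Cfam C -> Dfam D -> absorbed t Cfam s D ->
            Cof t Cfam s D = C -> D x -> C y -> Rbar_le (t x y) (Finite (K * (K * M0)))).
  { intros C D x y HC HD Ha E Dx Cy.
    destruct (Cof_spec t Cfam s D Ha) as [_ [p [b [Dp [Cb Hpb]]]]]. rewrite E in Cb.
    apply (Q _ _ b).
    - apply (Q _ _ p).
      + apply le_fin with (c1 * s); auto. apply (proj2 (HD1 D HD)); auto.
      + apply le_fin with s; auto.
    - apply le_fin with (c2 * s'); [|lra]. apply (proj2 (HC1 C HC)); auto. }
  exists (Nfam t Dfam Cfam s). split.
  - split.
    + intros M HM. destruct HM as [[C [HC ->]] | [D [HD [Hna ->]]]].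
      * split.
        -- intros x [Hx | [D [HD [Ha [_ Hx]]]]].
           ++ apply (proj1 (HC1 C HC)); auto.
           ++ apply (proj1 (HD1 D HD)); auto.
        -- intros x y [Cx | [D [HD [Ha [E Dx]]]]] [Cy | [D' [HD' [Ha' [E' Dy]]]]].
           ++ apply le_fin with (c2 * s'); [|lra]. apply (proj2 (HC1 C HC)); auto.
           ++ rewrite Hsym. apply le_fin with (K * (K * M0)); [|lra]. exact (cross C D' y x HC HD' Ha' E' Dy Cx).
           ++ apply le_fin with (K * (K * M0)); [|lra]. exact (cross C D x y HC HD Ha E Dx Cy).
           ++ destruct (Cof_spec t Cfam s D Ha) as [_ [p [b [Dp [Cb Hpb]]]]].
              rewrite E in Cb. apply (Q _ _ b).
              ** apply le_fin with (K * (K * M0)); [|lra]. exact (cross C D x b HC HD Ha E Dx Cb).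
              ** rewrite Hsym. exact (cross C D' y b HC HD' Ha' E' Dy Cb).
      * split.
        -- apply (proj1 (HD1 D HD)).
        -- intros x y Dx Dy. apply le_fin with (c1 * s); [|lra]. apply (proj2 (HD1 D HD)); auto.
    + intros x Hx. destruct (HAB x Hx) as [HA|HB].
      * destruct (HD2 x HA) as [D [HD Dx]].
        destruct (classic (absorbed t Cfam s D)) as [Ha|Hna].
        -- exists (Cp t Dfam Cfam s (Cof t Cfam s D)). split.
           ++ left. exists (Cof t Cfam s D). split; auto. apply (Cof_spec t Cfam s D Ha).
           ++ right. exists D. auto.
        -- exists D. split; auto. right. exists D; auto.
      * destruct (HC2 x HB) as [C [HC Cx]]. exists (Cp t Dfam Cfam s C). split.
        -- left. exists C; auto.
        -- left; auto.
  - intros U HU l Hnd Hl.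
    destruct (classic (exists D q, Dfam D /\ ~ absorbed t Cfam s D /\ D q /\ U q))
      as [[D0 [q [HD0 [Hna0 [D0q Uq]]]]] | Hno].
    + apply (at_most_transfer (gmap t Dfam Cfam s) (fun D => Dfam D /\ exists x, D x /\ U x)
               m l (HDm U HU) Hnd).
      intros N HN. destruct (Hl N HN) as [HNf [u [Nu Uu]]].
      destruct HNf as [[C [HC ->]] | [D [HD [Hna ->]]]].
      * destruct Nu as [Cu | [D [HD [Ha [EC Du]]]]].
        -- exfalso. apply Hna0. exists q, u, C. repeat split; auto.
        -- exists D. split. { split; auto. exists u; auto. }
           unfold gmap. destruct (excluded_middle_informative (absorbed t Cfam s D));
             [subst C; reflexivity | contradiction].
      * exists D. split. { split; auto. exists u; auto. }
        unfold gmap. destruct (excluded_middle_informative (absorbed t Cfam s D));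
          [contradiction | reflexivity].
    + set (U' := fun z => U z \/ exists D p, Dfam D /\ (exists u, U u /\ D u) /\ D p /\
                     Cof t Cfam s D z /\ Rbar_le (t p z) (Finite s)).
      set (M1 := Rmax s (c1 * s)).
      assert (HM1a : s <= M1) by apply Rmax_l.
      assert (HM1b : c1 * s <= M1) by apply Rmax_r.
      assert (HL1 : M1 <= K * M1) by (apply Kw; lra).
      assert (HL2 : K * M1 <= K * (K * M1)) by (apply Kw; nra).
      assert (aux : forall z, U' z -> forall u', U u' -> Rbar_le (t u' z) (Finite (K * (K * M1)))).
      { intros z [Uz | [D [p [HD [[u [Uu Du]] [Dp [_ Hpz]]]]]]] u' Uu'.
        - apply le_fin with s; [apply HU; auto | nra].
        - apply (Q _ _ p).
          + apply (Q _ _ u).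
            * apply le_fin with s; [apply HU; auto|lra].
            * apply le_fin with (c1 * s); [apply (proj2 (HD1 D HD)); auto|lra].
          + apply le_fin with s; [auto|lra]. }
      assert (HU' : diam_le t U' s').
      { intros x y Hx Hy.
        assert (exists u, U u) as [u Uu].
        { destruct Hx as [Ux | [D [p [_ [[u [Uu _]] _]]]]]; eauto. }
        apply le_fin with (K * (K * (K * M1))); [|exact Hs'].
        apply (Q _ _ u).
        - rewrite Hsym. apply aux; auto.
        - apply aux; auto. }
      apply (at_most_transfer (Cp t Dfam Cfam s) (fun C => Cfam C /\ exists x, C x /\ U' x)
               m l (HCm U' HU') Hnd).
      intros N HN. destruct (Hl N HN) as [HNf [u [Nu Uu]]].
      destruct HNf as [[C [HC ->]] | [D [HD [Hna ->]]]].
      * exists C. split; [split; auto|reflexivity].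
        destruct Nu as [Cu | [D [HD [Ha [EC Du]]]]].
        -- exists u; split; auto. left; auto.
        -- destruct (Cof_spec t Cfam s D Ha) as [_ [p [b [Dp [Cb Hpb]]]]].
           exists b. rewrite <- EC. split; auto. right. exists D, p.
           repeat split; auto. exists u; auto.
      * exfalso; apply Hno; exists D, u; auto.
Qed.

Lemma pow_le1 (m : R) (k : nat) : 0 <= m <= 1 -> m ^ k <= 1.
Proof.
  intros Hm; induction k; simpl; [lra|].
  assert (0 <= m ^ k) by (apply pow_le; lra). nra.
Qed.

Lemma pow_dec (m : R) (k j : nat) : 0 <= m <= 1 -> (k <= j)%nat -> m ^ j <= m ^ k.
Proof.
  intros Hm Hkj. replace j with (k + (j - k))%nat by lia. rewrite pow_add.
  assert (0 <= m ^ k) by (apply pow_le; lra).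
  assert (m ^ (j - k) <= 1) by (apply pow_le1; lra).
  assert (0 <= m ^ (j - k)) by (apply pow_le; lra). nra.
Qed.

Lemma find_annulus (v R0 m : R) : 0 < v -> 0 < R0 -> 0 < m < 1 ->
  R0 <= v \/ exists k, R0 * m ^ (S k) <= v /\ v < R0 * m ^ k.
Proof.
  intros Hv HR Hm.
  destruct (pow_lt_1_zero m) with (y := v / R0) as [N HN].
  { rewrite Rabs_right; lra. }
  { apply Rdiv_lt_0_compat; lra. }
  assert (HN' : R0 * m ^ N <= v).
  { specialize (HN N (le_n N)). rewrite Rabs_right in HN.
    2: { apply Rle_ge, pow_le; lra. }
    apply Rlt_le. apply (Rmult_lt_compat_l R0) in HN; [|lra].
    replace (R0 * (v / R0)) with v in HN by (field; lra). exact HN. }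
  clear HN. induction N.
  - left. simpl in HN'. lra.
  - destruct (Rle_lt_dec (R0 * m ^ N) v) as [H|H].
    + apply IHN; auto.
    + right. exists N. split; auto.
Qed.

Lemma nodup_all_eq {A : Type} (l : list A) (a : A) :
  NoDup l -> (forall y, In y l -> y = a) -> (length l <= 1)%nat.
Proof.
  intros Hnd H. destruct l as [|x [|y l]]; simpl; try lia.
  inversion Hnd; subst. exfalso. apply H2. left.
  rewrite (H y (or_intror (or_introl eq_refl))), (H x (or_introl eq_refl)). reflexivity.
Qed.

Lemma bc_mono {X : Type} (rho : X -> X -> Rbar) (P : option X) C C' B :
  C <= C' -> bounded_cover rho P C B -> bounded_cover rho P C' B.
Proof.
  intros HC [H1 H2]. split; auto. intros b Hb. destruct (H1 b Hb) as [Ha Hd].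
  split; auto. intros x y Hx Hy. apply le_fin with C; auto.
Qed.

Definition Ann {X : Type} (Q1 Q2 : option X) (n : X -> R) (R0 mu : R) (k : nat) (x : X) : Prop :=
  Q1 <> Some x /\ Q2 <> Some x /\ R0 * mu ^ (S k) <= n x /\ n x < R0 * mu ^ k.

Definition Fset {X : Type} (Q1 Q2 : option X) (n : X -> R) (R0 : R) (x : X) : Prop :=
  Q2 <> Some x /\ (Q1 = Some x \/ (Q1 <> Some x /\ R0 <= n x)).

Definition Bsel {X : Type} (rho : X -> X -> Rbar) (Q1 : option X) (c : R) (m : nat) (s : R)
  : (X -> Prop) -> Prop :=
  epsilon (inhabits (fun _ : X -> Prop => False))
    (fun B => 0 < s -> bounded_cover rho Q1 (c * s) B /\ multiplicity_le rho B s (S m)).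

Lemma Bsel_spec {X : Type} (rho : X -> X -> Rbar) (Q1 : option X) (c : R) (m : nat) :
  (forall s, 0 < s -> exists B, bounded_cover rho Q1 (c * s) B /\ multiplicity_le rho B s (S m)) ->
  forall s, 0 < s -> bounded_cover rho Q1 (c * s) (Bsel rho Q1 c m s) /\
                     multiplicity_le rho (Bsel rho Q1 c m s) s (S m).
Proof.
  intros H s Hs. unfold Bsel.
  apply (epsilon_spec (inhabits (fun _ : X -> Prop => False))
     (fun B => 0 < s -> bounded_cover rho Q1 (c * s) B /\ multiplicity_le rho B s (S m))); auto.
  destruct (H s Hs) as [B HB]. exists B. auto.
Qed.

Definition AnnFam {X : Type} (rho : X -> X -> Rbar) (Q1 Q2 : option X) (n : X -> R)
  (c : R) (m : nat) (R0 mu t : R) (p : nat) (M : X -> Prop) : Prop :=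
  exists i b, Bsel rho Q1 c m (t * (R0 * mu ^ (2 * i + p)) ^ 2) b /\
    M = (fun x => b x /\ Ann Q1 Q2 n R0 mu (2 * i + p) x).

Definition Fam {X : Type} (rho : X -> X -> Rbar) (Q1 Q2 : option X) (n : X -> R)
  (c : R) (m : nat) (R0 mu t : R) (p : nat) (inclF : Prop) (M : X -> Prop) : Prop :=
  AnnFam rho Q1 Q2 n c m R0 mu t p M \/ (inclF /\ M = Fset Q1 Q2 n R0).

Record GH {X : Type} (rho sigma : X -> X -> Rbar) (Q1 Q2 : option X) (n : X -> R) (K K2 : R)
  : Prop := {
  gK : 1 <= K;
  gK2 : 1 <= K2;
  gsym : forall x y, sigma x y = sigma y x;
  g0 : forall x, sigma x x = Finite 0;
  gqt : forall x y z a b, Rbar_le (sigma x z) (Finite a) -> Rbar_le (sigma z y) (Finite b) ->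
          Rbar_le (sigma x y) (Finite (K2 * Rmax a b));
  gn : forall x, Q1 <> Some x -> Q2 <> Some x -> 0 < n x;
  g3 : forall x y, Q1 <> Some x -> Q2 <> Some x -> Q1 <> Some y -> Q2 <> Some y ->
         forall a, Rbar_le (sigma x y) (Finite a) <-> Rbar_le (rho x y) (Finite (a * n x * n y));
  gQ1 : forall q x, Q1 = Some q -> Q1 <> Some x -> Q2 <> Some x ->
         forall a, Rbar_le (sigma x q) (Finite a) <-> / n x <= a;
  gn1 : forall x y, Q1 <> Some x -> Q2 <> Some x -> Q1 <> Some y -> Q2 <> Some y ->
         Rbar_le (rho x y) (Finite (K * Rmax (n x) (n y)));
  gn2 : forall x y, Q1 <> Some x -> Q2 <> Some x -> Q1 <> Some y -> Q2 <> Some y ->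
         forall a, Rbar_le (rho x y) (Finite a) -> n x <= K * Rmax a (n y)
}.

Lemma L_sep {X : Type} rho sigma (Q1 Q2 : option X) n K K2 (H : GH rho sigma Q1 Q2 n K K2)
  u v t R0 :
  Q1 <> Some u -> Q2 <> Some u -> Q1 <> Some v -> Q2 <> Some v ->
  K * n v < n u -> n v < R0 -> 0 < t -> 0 < R0 -> R0 <= / (K * t) ->
  Rbar_le (sigma u v) (Finite t) -> False.
Proof.
  intros h1 h2 h3 h4 Hlt HvR Ht HR HRt Hs.
  pose proof (gK _ _ _ _ _ _ _ H) as HK.
  pose proof (gn _ _ _ _ _ _ _ H u h1 h2) as Hu.
  pose proof (gn _ _ _ _ _ _ _ H v h3 h4) as Hv.
  apply (g3 _ _ _ _ _ _ _ H u v h1 h2 h3 h4) in Hs.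
  pose proof (gn2 _ _ _ _ _ _ _ H u v h1 h2 h3 h4 _ Hs) as H2.
  assert (HKt : R0 * (K * t) <= 1).
  { apply Rmult_le_compat_r with (r := K * t) in HRt; [|nra].
    rewrite Rinv_l in HRt; nra. }
  unfold Rmax in H2. destruct (Rle_dec (t * n u * n v) (n v)).
  - lra.
  - assert (1 <= K * t * n v).
    { apply Rmult_le_reg_l with (n u); [lra|]. nra. }
    nra.
Qed.

Lemma L_annsep {X : Type} rho sigma (Q1 Q2 : option X) n K K2 (H : GH rho sigma Q1 Q2 n K K2)
  u v t R0 mu k j :
  mu = / (2 * K) -> (k + 2 <= j)%nat ->
  Ann Q1 Q2 n R0 mu k u -> Ann Q1 Q2 n R0 mu j v ->
  0 < t -> 0 < R0 -> R0 <= / (K * t) ->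
  Rbar_le (sigma u v) (Finite t) -> False.
Proof.
  intros Hmu Hkj [h1 [h2 [Hu1 Hu2]]] [h3 [h4 [Hv1 Hv2]]] Ht HR HRt Hs.
  pose proof (gK _ _ _ _ _ _ _ H) as HK.
  assert (Hmu0 : 0 < mu) by (subst; apply Rinv_0_lt_compat; lra).
  assert (HKmu : K * mu = / 2) by (subst; field; lra).
  assert (Hmu1 : mu <= 1).
  { assert (mu <= / 2) by nra. lra. }
  assert (Hp1 : mu ^ j <= mu ^ (S (S k))) by (apply pow_dec; [lra|lia]).
  assert (Hp2 : mu ^ j <= 1) by (apply pow_le1; lra).
  assert (E : mu ^ (S (S k)) = mu * mu ^ (S k)) by reflexivity.
  pose proof (gn _ _ _ _ _ _ _ H u h1 h2).
  pose proof (gn _ _ _ _ _ _ _ H v h3 h4).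
  apply (L_sep rho sigma Q1 Q2 n K K2 H u v t R0); auto.
  - assert (n v < mu * n u).
    { apply Rlt_le_trans with (R0 * mu ^ j); auto.
      apply Rle_trans with (R0 * mu ^ (S (S k))). { apply Rmult_le_compat_l; lra. }
      rewrite E. nra. }
    nra.
  - nra.
Qed.

Lemma L_Fsep {X : Type} rho sigma (Q1 Q2 : option X) n K K2 (H : GH rho sigma Q1 Q2 n K K2)
  u v t R0 mu k :
  mu = / (2 * K) -> (1 <= k)%nat ->
  Fset Q1 Q2 n R0 u -> Ann Q1 Q2 n R0 mu k v ->
  0 < t -> 0 < R0 -> R0 <= / (K * t) ->
  Rbar_le (sigma u v) (Finite t) -> False.
Proof.
  intros Hmu Hk [h2 Hu] [h3 [h4 [Hv1 Hv2]]] Ht HR HRt Hs.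
  pose proof (gK _ _ _ _ _ _ _ H) as HK.
  assert (Hmu0 : 0 < mu) by (subst; apply Rinv_0_lt_compat; lra).
  assert (HKmu : K * mu = / 2) by (subst; field; lra).
  assert (Hmu1 : mu <= 1).
  { assert (mu <= / 2) by nra. lra. }
  assert (Hp1 : mu ^ k <= mu ^ 1) by (apply pow_dec; [lra|lia]).
  assert (Hp2 : mu ^ k <= 1) by (apply pow_le1; lra).
  pose proof (gn _ _ _ _ _ _ _ H v h3 h4).
  assert (HKt : R0 * (K * t) <= 1).
  { apply Rmult_le_compat_r with (r := K * t) in HRt; [|nra].
    rewrite Rinv_l in HRt; nra. }
  destruct Hu as [Eu | [h1 HRu]].
  - rewrite (gsym _ _ _ _ _ _ _ H) in Hs.
    apply (gQ1 _ _ _ _ _ _ _ H u v Eu h3 h4) in Hs.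
    assert (1 <= t * n v).
    { apply Rmult_le_compat_r with (r := n v) in Hs; [|lra].
      rewrite Rinv_l in Hs; lra. }
    assert (n v < R0) by nra.
    assert (t * n v < t * R0) by (apply Rmult_lt_compat_l; lra). assert (t * R0 <= R0 * (K * t)) by nra. lra.
  - apply (L_sep rho sigma Q1 Q2 n K K2 H u v t R0); auto.
    + simpl in Hp1. nra.
    + nra.
Qed.

Lemma L_Fdiam {X : Type} rho sigma (Q1 Q2 : option X) n K K2 (H : GH rho sigma Q1 Q2 n K K2) R0 :
  0 < R0 -> diam_le sigma (Fset Q1 Q2 n R0) (K * / R0).
Proof.
  intros HR x y [hx Hx] [hy Hy].
  pose proof (gK _ _ _ _ _ _ _ H) as HK.
  assert (HiR : 0 < / R0) by (apply Rinv_0_lt_compat; lra).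
  destruct Hx as [Ex | [hx1 Rx]]; destruct Hy as [Ey | [hy1 Ry]].
  - rewrite Ex in Ey. injection Ey as <-. rewrite (g0 _ _ _ _ _ _ _ H). simpl. nra.
  - rewrite (gsym _ _ _ _ _ _ _ H). apply (gQ1 _ _ _ _ _ _ _ H x y Ex hy1 hy).
    assert (/ n y <= / R0) by (apply Rinv_le_contravar; lra). nra.
  - apply (gQ1 _ _ _ _ _ _ _ H y x Ey hx1 hx).
    assert (/ n x <= / R0) by (apply Rinv_le_contravar; lra). nra.
  - apply (g3 _ _ _ _ _ _ _ H x y hx1 hx hy1 hy).
    apply le_fin with (K * Rmax (n x) (n y)).
    + apply (gn1 _ _ _ _ _ _ _ H); auto.
    + assert (Rmax (n x) (n y) <= / R0 * n x * n y).
      { assert (E : / R0 * n x * n y = (n x * n y) / R0) by (field; lra).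
        rewrite E. apply Rmax_lub.
        - apply Rmult_le_reg_r with R0; [lra|]. unfold Rdiv.
          rewrite Rmult_assoc, Rinv_l; nra.
        - apply Rmult_le_reg_r with R0; [lra|]. unfold Rdiv.
          rewrite Rmult_assoc, Rinv_l; nra. }
      assert (0 <= Rmax (n x) (n y)) by (eapply Rle_trans; [|apply Rmax_l]; lra).
      nra.
Qed.

Lemma L_anndiam {X : Type} rho sigma (Q1 Q2 : option X) n K K2 (H : GH rho sigma Q1 Q2 n K K2)
  c m R0 mu t p :
  (forall s, 0 < s -> exists B, bounded_cover rho Q1 (c * s) B /\ multiplicity_le rho B s (S m)) ->
  0 < c -> 0 < t -> 0 < R0 -> mu = / (2 * K) ->
  forall M, AnnFam rho Q1 Q2 n c m R0 mu t p M ->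
  (forall x, M x -> Q2 <> Some x) /\ diam_le sigma M (c * (2 * K) ^ 2 * t).
Proof.
  intros Hadm Hc Ht HR Hmu M [i [b [Hb ->]]].
  pose proof (gK _ _ _ _ _ _ _ H) as HK.
  assert (Hmu0 : 0 < mu) by (subst; apply Rinv_0_lt_compat; lra).
  assert (H2Kmu : 2 * K * mu = 1) by (subst; field; lra).
  set (k := (2 * i + p)%nat) in *.
  set (r := R0 * mu ^ k) in *.
  assert (Hr : 0 < r) by (unfold r; apply Rmult_lt_0_compat; [lra|apply pow_lt; lra]).
  assert (Hs0 : 0 < t * r ^ 2) by (apply Rmult_lt_0_compat; [lra|apply pow_lt; lra]).
  destruct (Bsel_spec rho Q1 c m Hadm _ Hs0) as [[HB1 _] _].
  split.
  - intros x [_ [_ [h _]]]. exact h.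
  - intros x y [bx [hx1 [hx2 [Hx1 Hx2]]]] [by' [hy1 [hy2 [Hy1 Hy2]]]].
    apply (g3 _ _ _ _ _ _ _ H x y hx1 hx2 hy1 hy2).
    apply le_fin with (c * (t * r ^ 2)).
    + apply (proj2 (HB1 b Hb)); auto.
    + assert (E : R0 * mu ^ S k = mu * r) by (unfold r; simpl; ring).
      rewrite E in Hx1, Hy1.
      assert (r <= 2 * K * n x) by nra.
      assert (r <= 2 * K * n y) by nra.
      assert (r * r <= (2 * K * n x) * (2 * K * n y)) by (apply Rmult_le_compat; lra).
      assert (0 <= c * t) by nra.
      replace (c * (2 * K) ^ 2 * t * n x * n y) with ((c * t) * ((2 * K * n x) * (2 * K * n y))) by ring.
      replace (c * (t * r ^ 2)) with ((c * t) * (r * r)) by ring.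
      apply Rmult_le_compat_l; lra.
Qed.

Lemma L_anncover {X : Type} rho (Q1 Q2 : option X) n c m R0 mu t i p x :
  (forall s, 0 < s -> exists B, bounded_cover rho Q1 (c * s) B /\ multiplicity_le rho B s (S m)) ->
  0 < t -> 0 < R0 -> 0 < mu ->
  Ann Q1 Q2 n R0 mu (2 * i + p) x ->
  exists M, AnnFam rho Q1 Q2 n c m R0 mu t p M /\ M x.
Proof.
  intros Hadm Ht HR Hmu Hx.
  assert (Hs0 : 0 < t * (R0 * mu ^ (2 * i + p)) ^ 2).
  { apply Rmult_lt_0_compat; [lra|]. apply pow_lt. apply Rmult_lt_0_compat; [lra|apply pow_lt; lra]. }
  destruct (Bsel_spec rho Q1 c m Hadm _ Hs0) as [[_ HB2] _].
  destruct Hx as [h1 Hx'].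
  destruct (HB2 x h1) as [b [Hb bx]].
  exists (fun y => b y /\ Ann Q1 Q2 n R0 mu (2 * i + p) y). split.
  - exists i, b. split; auto.
  - split; auto. split; auto.
Qed.

Lemma L_mult {X : Type} rho sigma (Q1 Q2 : option X) n K K2 (H : GH rho sigma Q1 Q2 n K K2)
  c m R0 mu t p (inclF : Prop) :
  (forall s, 0 < s -> exists B, bounded_cover rho Q1 (c * s) B /\ multiplicity_le rho B s (S m)) ->
  0 < t -> 0 < R0 -> R0 <= / (K * t) -> mu = / (2 * K) -> (inclF -> p = 1%nat) ->
  multiplicity_le sigma (Fam rho Q1 Q2 n c m R0 mu t p inclF) t (S m).
Proof.
  intros Hadm Ht HR HRt Hmu HF U HU l Hnd Hl.
  pose proof (gK _ _ _ _ _ _ _ H) as HK.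
  assert (Hmu0 : 0 < mu) by (subst; apply Rinv_0_lt_compat; lra).
  destruct (classic (inclF /\ In (Fset Q1 Q2 n R0) l)) as [[HiF HinF] | HnF].
  - apply (Nat.le_trans _ 1%nat); [|lia].
    apply nodup_all_eq with (Fset Q1 Q2 n R0); auto.
    destruct (Hl _ HinF) as [_ [u [Fu Uu]]].
    intros y Hy. destruct (Hl y Hy) as [[Hy1 | [_ Hy1]] [v [yv Uv]]]; auto.
    exfalso. destruct Hy1 as [i [b [_ ->]]]. destruct yv as [_ Av].
    rewrite (HF HiF) in Av.
    apply (L_Fsep rho sigma Q1 Q2 n K K2 H u v t R0 mu (2 * i + 1)); auto.
    lia.
  - assert (Hann : forall y, In y l -> AnnFam rho Q1 Q2 n c m R0 mu t p y /\ exists x, y x /\ U x).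
    { intros y Hy. destruct (Hl y Hy) as [[Hy1 | [Hi ->]] Hm]; auto.
      exfalso; apply HnF; auto. }
    destruct l as [|M0 l0]; [simpl; lia|].
    destruct (Hann M0 (or_introl eq_refl)) as [[i0 [b0 [_ ->]]] [u0 [[_ Au0] Uu0]]].
    set (k0 := (2 * i0 + p)%nat) in *.
    set (r0 := R0 * mu ^ k0) in *.
    assert (Hr : 0 < r0) by (unfold r0; apply Rmult_lt_0_compat; [lra|apply pow_lt; lra]).
    assert (Hs0 : 0 < t * r0 ^ 2) by (apply Rmult_lt_0_compat; [lra|apply pow_lt; lra]).
    destruct (Bsel_spec rho Q1 c m Hadm _ Hs0) as [_ HBm].
    set (U' := fun x => U x /\ Ann Q1 Q2 n R0 mu k0 x).
    assert (HU' : diam_le rho U' (t * r0 ^ 2)).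
    { intros x y [Ux [hx1 [hx2 [_ Hx]]]] [Uy [hy1 [hy2 [_ Hy]]]].
      change (R0 * mu ^ k0) with r0 in Hx, Hy. pose proof (gn _ _ _ _ _ _ _ H x hx1 hx2).
      pose proof (gn _ _ _ _ _ _ _ H y hy1 hy2).
      apply le_fin with (t * n x * n y).
      - apply (g3 _ _ _ _ _ _ _ H x y hx1 hx2 hy1 hy2). apply HU; auto.
      - assert (n x * n y <= r0 * r0) by (apply Rmult_le_compat; lra).
        simpl. nra. }
    apply (at_most_transfer (fun b => fun x => b x /\ Ann Q1 Q2 n R0 mu k0 x)
             (fun b => Bsel rho Q1 c m (t * r0 ^ 2) b /\ exists x, b x /\ U' x)
             (S m) _ (HBm U' HU') Hnd).
    intros y Hy. destruct (Hann y Hy) as [[i [b [Hb ->]]] [v [[bv Av] Uv]]].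
    assert (i = i0).
    { destruct (Nat.lt_total i i0) as [Hlt|[Heq|Hgt]]; auto; exfalso.
      - exact (L_annsep rho sigma Q1 Q2 n K K2 H v u0 t R0 mu (2 * i + p) k0 Hmu
                 ltac:(unfold k0; lia) Av Au0 Ht HR HRt (HU v u0 Uv Uu0)).
      - exact (L_annsep rho sigma Q1 Q2 n K K2 H u0 v t R0 mu k0 (2 * i + p) Hmu
                 ltac:(unfold k0; lia) Au0 Av Ht HR HRt (HU u0 v Uu0 Uv)). }
    subst i. exists b. split; [split|]; auto.
    exists v. unfold U'. auto.
Qed.

Lemma even_odd_nat (k : nat) : exists j, k = (2 * j)%nat \/ k = (2 * j + 1)%nat.
Proof.
  induction k as [|k [j [E|E]]].
  - exists 0%nat; left; reflexivity.
  - exists j; right; lia.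
  - exists (S j); left; lia.
Qed.

Lemma G_main {X : Type} rho sigma (Q1 Q2 : option X) n K K2 (H : GH rho sigma Q1 Q2 n K K2) m :
  nagata_admissible rho Q1 m -> nagata_admissible sigma Q2 m.
Proof.
  intros [c [Hc Hadm]].
  pose proof (gK _ _ _ _ _ _ _ H) as HK.
  pose proof (gK2 _ _ _ _ _ _ _ H) as HK2.
  set (cA := c * (2 * K) ^ 2).
  assert (HcA : 0 <= cA) by (unfold cA; apply Rmult_le_pos; [lra|apply pow_le; lra]).
  set (al := K2 * (K2 * (K2 * Rmax 1 cA))).
  assert (Hal : 1 <= al).
  { assert (1 <= Rmax 1 cA) by apply Rmax_l.
    assert (1 <= K2 * Rmax 1 cA) by nra.
    assert (1 <= K2 * (K2 * Rmax 1 cA)) by nra.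
    unfold al; nra. }
  set (c2 := Rmax cA (K * K)).
  assert (Hc2 : 0 <= c2) by (unfold c2; eapply Rle_trans; [|apply Rmax_r]; nra).
  set (cf := Rmax (Rmax cA 1) (c2 * al)).
  assert (Hcf : 1 <= cf) by (unfold cf; eapply Rle_trans; [|apply Rmax_l]; apply Rmax_r).
  exists (K2 * (K2 * (K2 * cf))). split.
  { assert (0 < K2 * cf) by nra. assert (0 < K2 * (K2 * cf)) by nra. nra. }
  intros s Hs.
  set (s' := al * s).
  assert (Hs' : 0 < s') by (unfold s'; nra).
  set (R0 := / (K * s')).
  assert (HR0 : 0 < R0) by (unfold R0; apply Rinv_0_lt_compat; nra).
  set (mu := / (2 * K)).
  assert (Hmu : 0 < mu) by (unfold mu; apply Rinv_0_lt_compat; lra).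
  assert (HR0s : R0 <= / (K * s)).
  { unfold R0. apply Rinv_le_contravar; [nra|]. assert (s <= s') by (unfold s'; nra). apply Rmult_le_compat_l; lra. }
  assert (HR0s' : R0 <= / (K * s')) by (unfold R0; lra).
  set (Dfam := Fam rho Q1 Q2 n c m R0 mu s 0 False).
  set (Cfam := Fam rho Q1 Q2 n c m R0 mu s' 1 True).
  set (A := fun x => exists i, Ann Q1 Q2 n R0 mu (2 * i + 0) x).
  set (B := fun x => Fset Q1 Q2 n R0 x \/ exists i, Ann Q1 Q2 n R0 mu (2 * i + 1) x).
  assert (HAB : forall x, Q2 <> Some x -> A x \/ B x).
  { intros x hx. destruct (classic (Q1 = Some x)) as [E|hx1].
    - right. left. split; auto.
    - pose proof (gn _ _ _ _ _ _ _ H x hx1 hx).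
      destruct (find_annulus (n x) R0 mu) as [HR|[k [Hk1 Hk2]]]; auto.
      { unfold mu. split; [apply Rinv_0_lt_compat; lra|].
        rewrite <- Rinv_1. apply Rinv_lt_contravar; lra. }
      + right. left. split; auto.
      + destruct (even_odd_nat k) as [j [Ej|Ej]].
        * left. exists j. replace (2 * j + 0)%nat with k by lia. repeat split; auto.
        * right. right. exists j. rewrite <- Ej. repeat split; auto. }
  assert (Hsm : K2 * (K2 * (K2 * Rmax s (cA * s))) <= s').
  { replace (Rmax s (cA * s)) with (Rmax 1 cA * s).
    - unfold s', al. lra.
    - rewrite Rmax_mult; [|lra]. f_equal; ring. }
  assert (HD1 : forall D, Dfam D -> (forall x, D x -> Q2 <> Some x) /\ diam_le sigma D (cA * s)).
  { intros D [HD | [[] _]].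
    exact (L_anndiam rho sigma Q1 Q2 n K K2 H c m R0 mu s 0 Hadm Hc Hs HR0 eq_refl D HD). }
  assert (HC1 : forall C, Cfam C -> (forall x, C x -> Q2 <> Some x) /\ diam_le sigma C (c2 * s')).
  { intros C [HC | [_ ->]].
    - destruct (L_anndiam rho sigma Q1 Q2 n K K2 H c m R0 mu s' 1 Hadm Hc Hs' HR0 eq_refl C HC)
        as [h1 h2].
      split; auto. intros x y Hx Hy. apply le_fin with (cA * s'); [apply h2; auto|].
      apply Rmult_le_compat_r; [lra|apply Rmax_l].
    - split. { intros x [h _]; exact h. }
      intros x y Hx Hy. apply le_fin with (K * / R0).
      + apply (L_Fdiam rho sigma Q1 Q2 n K K2 H R0 HR0); auto.
      + unfold R0. rewrite Rinv_inv. replace (K * (K * s')) with ((K * K) * s') by ring.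
        apply Rmult_le_compat_r; [lra|apply Rmax_r]. }
  assert (HD2 : forall x, A x -> exists D, Dfam D /\ D x).
  { intros x [i Hi]. destruct (L_anncover rho Q1 Q2 n c m R0 mu s i 0 x Hadm Hs HR0 Hmu Hi)
      as [M [HM Mx]]. exists M; split; auto. left; auto. }
  assert (HC2 : forall x, B x -> exists C, Cfam C /\ C x).
  { intros x [HF | [i Hi]].
    - exists (Fset Q1 Q2 n R0). split; auto. right; auto.
    - destruct (L_anncover rho Q1 Q2 n c m R0 mu s' i 1 x Hadm Hs' HR0 Hmu Hi)
        as [M [HM Mx]]. exists M; split; auto. left; auto. }
  assert (HDm : multiplicity_le sigma Dfam s (S m)).
  { apply (L_mult rho sigma Q1 Q2 n K K2 H c m R0 mu s 0 False); auto. intros []. }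
  assert (HCm : multiplicity_le sigma Cfam s' (S m)).
  { apply (L_mult rho sigma Q1 Q2 n K K2 H c m R0 mu s' 1 True); auto. }
  destruct (union_lemma sigma Q2 K2 (S m) HK2 (gsym _ _ _ _ _ _ _ H) (gqt _ _ _ _ _ _ _ H)
              A B HAB s s' cA c2 Hs HcA Hsm Dfam Cfam HD1 HD2 HC1 HC2 HDm HCm)
    as [N [HN1 HN2]].
  exists N. split; auto.
  eapply bc_mono; [|exact HN1].
  replace (Rmax (Rmax (cA * s) s) (c2 * s')) with (cf * s).
  - apply Req_le. ring.
  - unfold cf, s'. rewrite Rmax_mult; [|lra]. rewrite Rmax_mult; [|lra]. f_equal; [f_equal|]; ring.
Qed.

Lemma div_le_iff (p a u v : R) : 0 < u -> 0 < v -> (p / (u * v) <= a <-> p <= a * u * v).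
Proof.
  intros Hu Hv. split; intro H.
  - apply Rmult_le_compat_r with (r := u * v) in H; [|nra].
    replace (p / (u * v) * (u * v)) with p in H by (field; lra). lra.
  - apply Rmult_le_reg_r with (u * v); [nra|].
    replace (p / (u * v) * (u * v)) with p by (field; lra). lra.
Qed.

Lemma RA (K p q r u v w : R) : 1 <= K -> 0 < u -> 0 < v -> 0 < w -> 0 <= p -> 0 <= q -> 0 <= r ->
  p <= K * Rmax q r -> p <= K * Rmax u v -> w <= K * Rmax q u -> w <= K * Rmax r v ->
  p / (u * v) <= K * K * Rmax (q / (u * w)) (r / (w * v)).
Proof.
  intros HK Hu Hv Hw Hp Hq Hr H1 H2 H3 H4.
  assert (Hpol : p * w <= K * K * (q * v) \/ p * w <= K * K * (r * u)).
  { unfold Rmax in *.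
    destruct (Rle_dec q r); destruct (Rle_dec u v); destruct (Rle_dec q u); destruct (Rle_dec r v);
      first [left; nra | right; nra | idtac].
    all: try (left; nra). all: try (right; nra).
    all: destruct (Rle_dec w (K * v)); destruct (Rle_dec w (K * u)); first [left; nra | right; nra]. }
  destruct Hpol as [Hpol|Hpol].
  - apply Rle_trans with (K * K * (q / (u * w))).
    + apply div_le_iff; auto.
      replace (K * K * (q / (u * w)) * u * v) with (K * K * (q * v) / w) by (field; lra).
      apply Rmult_le_reg_r with w; auto.
      replace (K * K * (q * v) / w * w) with (K * K * (q * v)) by (field; lra). lra.
    + apply Rmult_le_compat_l; [nra|apply Rmax_l].
  - apply Rle_trans with (K * K * (r / (w * v))).
    + apply div_le_iff; auto.
      replace (K * K * (r / (w * v)) * u * v) with (K * K * (r * u) / w) by (field; lra).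
      apply Rmult_le_reg_r with w; auto.
      replace (K * K * (r * u) / w * w) with (K * K * (r * u)) by (field; lra). lra.
    + apply Rmult_le_compat_l; [nra|apply Rmax_r].
Qed.

Lemma RB (K r v w : R) : 1 <= K -> 0 < v -> 0 < w -> 0 <= r ->
  w <= K * Rmax r v -> / v <= K * Rmax (/ w) (r / (w * v)).
Proof.
  intros HK Hv Hw Hr H.
  unfold Rmax in H. destruct (Rle_dec r v).
  - apply Rle_trans with (K * / w); [|apply Rmult_le_compat_l; [lra|apply Rmax_l]].
    apply Rmult_le_reg_r with (v * w); [nra|].
    replace (/ v * (v * w)) with w by (field; lra).
    replace (K * / w * (v * w)) with (K * v) by (field; lra). lra.
  - apply Rle_trans with (K * (r / (w * v))); [|apply Rmult_le_compat_l; [lra|apply Rmax_r]].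
    apply Rmult_le_reg_r with (v * w); [nra|].
    replace (/ v * (v * w)) with w by (field; lra).
    replace (K * (r / (w * v)) * (v * w)) with (K * r) by (field; lra). lra.
Qed.

Lemma RD (K p u v : R) : 1 <= K -> 0 < u -> 0 < v -> 0 <= p ->
  p <= K * Rmax u v -> p / (u * v) <= K * Rmax (/ u) (/ v).
Proof.
  intros HK Hu Hv Hp H.
  unfold Rmax in H. destruct (Rle_dec u v).
  - apply Rle_trans with (K * / u); [|apply Rmult_le_compat_l; [lra|apply Rmax_l]].
    apply div_le_iff; auto.
    replace (K * / u * u * v) with (K * v) by (field; lra). lra.
  - apply Rle_trans with (K * / v); [|apply Rmult_le_compat_l; [lra|apply Rmax_r]].
    apply div_le_iff; auto.
    replace (K * / v * u * v) with (K * u) by (field; lra). lra.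
Qed.

Lemma RG2 (K p a u v : R) : 1 <= K -> 0 < u -> 0 < v -> 0 <= p ->
  p / (u * v) <= a -> v <= K * Rmax p u -> / u <= K * Rmax a (/ v).
Proof.
  intros HK Hu Hv Hp H1 H2.
  apply div_le_iff in H1; auto.
  unfold Rmax in H2. destruct (Rle_dec p u).
  - apply Rle_trans with (K * / v); [|apply Rmult_le_compat_l; [lra|apply Rmax_r]].
    apply Rmult_le_reg_r with (u * v); [nra|].
    replace (/ u * (u * v)) with v by (field; lra).
    replace (K * / v * (u * v)) with (K * u) by (field; lra). lra.
  - apply Rle_trans with (K * a); [|apply Rmult_le_compat_l; [lra|apply Rmax_l]].
    apply Rmult_le_reg_r with u; auto.
    replace (/ u * u) with 1 by (field; lra). nra.
Qed.

Lemma dec_t (P : Prop) : P -> dec P = true.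
Proof. intros H. unfold dec. destruct (excluded_middle_informative P); auto; contradiction. Qed.
Lemma dec_f (P : Prop) : ~ P -> dec P = false.
Proof. intros H. unfold dec. destruct (excluded_middle_informative P); auto; contradiction. Qed.

Lemma qdiv_nz (a b : R) : b <> 0 -> qdiv a b = Finite (a / b).
Proof. intros H. unfold qdiv. destruct (Req_EM_T b 0); [contradiction|reflexivity]. Qed.
Lemma qdiv_0 (a : R) : qdiv a 0 = p_infty.
Proof. unfold qdiv. destruct (Req_EM_T 0 0); [reflexivity|lra]. Qed.

Lemma rbar_max_fin (a b : R) : rbar_max (Finite a) (Finite b) = Finite (Rmax a b).
Proof.
  unfold rbar_max, Rmax. destruct (Rle_dec a b).
  - rewrite dec_t; auto.
  - rewrite dec_f; auto.
Qed.


Lemma d_fin {X : Type} K (d : X -> X -> Rbar) pinf (Hq : is_quasi_metric K d pinf) x y :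
  pinf <> Some x -> pinf <> Some y -> d x y = Finite (real (d x y)).
Proof.
  intros hx hy. destruct Hq as [_ [Hnn [_ [_ [_ Hinf]]]]].
  destruct (d x y) eqn:E; auto.
  - exfalso. apply Hinf in E. destruct E as [i [Ei [_ [<-|<-]]]]; auto.
  - exfalso. specialize (Hnn x y). rewrite E in Hnn. exact Hnn.
Qed.

Lemma d_diag {X : Type} K (d : X -> X -> Rbar) pinf (Hq : is_quasi_metric K d pinf) x :
  d x x = Finite 0.
Proof. destruct Hq as [_ [_ [_ [Hz _]]]]. apply Hz; reflexivity. Qed.

Lemma dr_sym {X : Type} K (d : X -> X -> Rbar) pinf (Hq : is_quasi_metric K d pinf) x y :
  real (d x y) = real (d y x).
Proof. destruct Hq as [_ [_ [Hs _]]]. rewrite Hs; reflexivity. Qed.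

Lemma dr_nn {X : Type} K (d : X -> X -> Rbar) pinf (Hq : is_quasi_metric K d pinf) x y :
  pinf <> Some x -> pinf <> Some y -> 0 <= real (d x y).
Proof.
  intros hx hy. pose proof (d_fin K d pinf Hq x y hx hy) as E.
  destruct Hq as [_ [Hnn _]]. specialize (Hnn x y). rewrite E in Hnn. exact Hnn.
Qed.

Lemma dr_pos {X : Type} K (d : X -> X -> Rbar) pinf (Hq : is_quasi_metric K d pinf) x y :
  pinf <> Some x -> pinf <> Some y -> x <> y -> 0 < real (d x y).
Proof.
  intros hx hy hxy. pose proof (dr_nn K d pinf Hq x y hx hy).
  destruct (Req_dec (real (d x y)) 0) as [E|E]; [|lra].
  exfalso. apply hxy. pose proof (d_fin K d pinf Hq x y hx hy) as F.
  destruct Hq as [_ [_ [_ [Hz _]]]]. apply Hz.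
  rewrite F, E. reflexivity.
Qed.

Lemma d_qt_fin {X : Type} K (d : X -> X -> Rbar) pinf (Hq : is_quasi_metric K d pinf) x y z a b :
  Rbar_le (d x z) (Finite a) -> Rbar_le (d z y) (Finite b) ->
  Rbar_le (d x y) (Finite (K * Rmax a b)).
Proof.
  intros H1 H2. pose proof Hq as Hq'. destruct Hq as [HK [Hnn [_ [_ [Hqt _]]]]].
  specialize (Hqt x y z).
  pose proof (Hnn x z) as N1. pose proof (Hnn z y) as N2.
  destruct (d x z) as [u| |]; simpl in H1; try contradiction; try (simpl in N1; contradiction).
  destruct (d z y) as [v| |]; simpl in H2; try contradiction; try (simpl in N2; contradiction).
  rewrite rbar_max_fin in Hqt. simpl in Hqt.
  eapply le_fin; [exact Hqt|].
  apply Rmult_le_compat_l; [lra|]. apply Rmax_le_compat; auto.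
Qed.

Lemma dr_qt {X : Type} K (d : X -> X -> Rbar) pinf (Hq : is_quasi_metric K d pinf) x y z :
  pinf <> Some x -> pinf <> Some y -> pinf <> Some z ->
  real (d x y) <= K * Rmax (real (d x z)) (real (d z y)).
Proof.
  intros hx hy hz.
  pose proof (d_qt_fin K d pinf Hq x y z (real (d x z)) (real (d z y))) as H.
  rewrite (d_fin K d pinf Hq x y hx hy) in H.
  apply H; [rewrite (d_fin K d pinf Hq x z hx hz) | rewrite (d_fin K d pinf Hq z y hz hy)];
    simpl; lra.
Qed.

Lemma I1 {X : Type} (d : X -> X -> Rbar) pinf o x : involution d pinf o x x = Finite 0.
Proof. unfold involution. rewrite dec_t; auto. Qed.

Lemma I2 {X : Type} K (d : X -> X -> Rbar) pinf o (Hq : is_quasi_metric K d pinf)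
  (Ho : pinf <> Some o) x y :
  x <> y -> pinf <> Some x -> pinf <> Some y -> x <> o -> y <> o ->
  involution d pinf o x y = Finite (real (d x y) / (real (d x o) * real (d y o))).
Proof.
  intros hxy hx hy hxo hyo. unfold involution.
  rewrite (dec_f (x = y)), (dec_f (pinf = Some x)), (dec_f (pinf = Some y)); auto.
  rewrite (dr_sym K d pinf Hq o y). apply qdiv_nz.
  pose proof (dr_pos K d pinf Hq x o hx ltac:(auto) hxo).
  pose proof (dr_pos K d pinf Hq y o hy ltac:(auto) hyo). nra.
Qed.

Lemma fin_of {X : Type} (pinf : option X) p y : pinf = Some p -> y <> p -> pinf <> Some y.
Proof. intros -> h E. injection E as E. auto. Qed.

Lemma I3a {X : Type} K (d : X -> X -> Rbar) pinf o (Hq : is_quasi_metric K d pinf)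
  (Ho : pinf <> Some o) p y :
  pinf = Some p -> y <> p -> y <> o -> involution d pinf o p y = Finite (/ real (d y o)).
Proof.
  intros Hp hy hyo. unfold involution.
  rewrite (dec_f (p = y)), (dec_t (pinf = Some p)); auto.
  rewrite (dr_sym K d pinf Hq o y).
  pose proof (dr_pos K d pinf Hq y o (fin_of pinf p y Hp hy) Ho hyo).
  rewrite qdiv_nz; [|lra]. f_equal. unfold Rdiv. ring.
Qed.

Lemma I3b {X : Type} K (d : X -> X -> Rbar) pinf o (Hq : is_quasi_metric K d pinf)
  (Ho : pinf <> Some o) p y :
  pinf = Some p -> y <> p -> y <> o -> involution d pinf o y p = Finite (/ real (d y o)).
Proof.
  intros Hp hy hyo. unfold involution.
  rewrite (dec_f (y = p)), (dec_f (pinf = Some y)), (dec_t (pinf = Some p)); auto.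
  2: { apply fin_of with p; auto. }
  pose proof (dr_pos K d pinf Hq y o (fin_of pinf p y Hp hy) Ho hyo).
  rewrite qdiv_nz; [|lra]. f_equal. unfold Rdiv. ring.
Qed.

Lemma I4a {X : Type} K (d : X -> X -> Rbar) pinf o (Hq : is_quasi_metric K d pinf)
  (Ho : pinf <> Some o) x :
  x <> o -> involution d pinf o x o = p_infty.
Proof.
  intros hx. unfold involution. rewrite (dec_f (x = o)); auto.
  rewrite (d_diag K d pinf Hq o). simpl.
  destruct (classic (pinf = Some x)) as [E|E].
  - rewrite (dec_t _ E). apply qdiv_0.
  - rewrite (dec_f _ E), (dec_f _ Ho). rewrite Rmult_0_r. apply qdiv_0.
Qed.

Lemma I4b {X : Type} K (d : X -> X -> Rbar) pinf o (Hq : is_quasi_metric K d pinf)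
  (Ho : pinf <> Some o) x :
  x <> o -> involution d pinf o o x = p_infty.
Proof.
  intros hx. unfold involution. rewrite (dec_f (o = x)); auto.
  rewrite (dec_f _ Ho).
  rewrite (d_diag K d pinf Hq o). simpl.
  destruct (classic (pinf = Some x)) as [E|E].
  - rewrite (dec_t _ E). apply qdiv_0.
  - rewrite (dec_f _ E). rewrite Rmult_0_l. apply qdiv_0.
Qed.

Lemma cls {X : Type} (pinf : option X) o x :
  x = o \/ pinf = Some x \/ (x <> o /\ pinf <> Some x).
Proof.
  destruct (classic (x = o)); auto. destruct (classic (pinf = Some x)); auto.
Qed.

Lemma rb_nn (t : Rbar) (a : R) : Rbar_le (Finite 0) t -> Rbar_le t (Finite a) -> 0 <= a.
Proof. destruct t; simpl; intros; try contradiction; lra. Qed.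

Lemma fin_goal (C C' T T1 T2 a b : R) : 0 <= C <= C' -> 0 <= Rmax a b ->
  T <= C * Rmax T1 T2 -> T1 <= a -> T2 <= b -> T <= C' * Rmax a b.
Proof.
  intros HC Hm H H1 H2.
  assert (Rmax T1 T2 <= Rmax a b) by (apply Rmax_le_compat; auto).
  nra.
Qed.

Lemma inv_nn {X : Type} K (d : X -> X -> Rbar) pinf o (Hq : is_quasi_metric K d pinf)
  (Ho : pinf <> Some o) x y : Rbar_le (Finite 0) (involution d pinf o x y).
Proof.
  destruct (classic (x = y)) as [<-|hxy]. { rewrite I1. simpl; lra. }
  destruct (cls pinf o x) as [Ex|[Px|[hxo hx]]].
  { subst x. rewrite (I4b K d pinf o Hq Ho y); [simpl; auto|auto]. }
  { destruct (classic (y = o)) as [->|hyo].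
    - rewrite (I4a K d pinf o Hq Ho x); [simpl; auto|]. intros ->. auto.
    - rewrite (I3a K d pinf o Hq Ho x y Px); auto. simpl.
      apply Rlt_le, Rinv_0_lt_compat, dr_pos with K pinf; auto. apply fin_of with x; auto. }
  destruct (cls pinf o y) as [Ey|[Py|[hyo hy]]].
  { subst y. rewrite (I4a K d pinf o Hq Ho x); [simpl; auto|auto]. }
  { rewrite (I3b K d pinf o Hq Ho y x Py); auto. simpl.
    apply Rlt_le, Rinv_0_lt_compat, dr_pos with K pinf; auto. }
  rewrite (I2 K d pinf o Hq Ho x y); auto. simpl.
  pose proof (dr_pos K d pinf Hq x o hx Ho hxo).
  pose proof (dr_pos K d pinf Hq y o hy Ho hyo).
  pose proof (dr_nn K d pinf Hq x y hx hy).
  apply Rmult_le_pos; auto. apply Rlt_le, Rinv_0_lt_compat. nra.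
Qed.

Lemma inv_sym {X : Type} K (d : X -> X -> Rbar) pinf o (Hq : is_quasi_metric K d pinf)
  (Ho : pinf <> Some o) x y : involution d pinf o x y = involution d pinf o y x.
Proof.
  destruct (classic (x = y)) as [<-|hxy]; auto.
  destruct (cls pinf o x) as [Ex|[Px|[hxo hx]]].
  { subst x. rewrite (I4b K d pinf o Hq Ho y), (I4a K d pinf o Hq Ho y); auto. }
  { destruct (classic (y = o)) as [->|hyo].
    - rewrite (I4b K d pinf o Hq Ho x), (I4a K d pinf o Hq Ho x); auto.
    - rewrite (I3a K d pinf o Hq Ho x y Px), (I3b K d pinf o Hq Ho x y Px); auto. }
  destruct (cls pinf o y) as [Ey|[Py|[hyo hy]]].
  { subst y. rewrite (I4b K d pinf o Hq Ho x), (I4a K d pinf o Hq Ho x); auto. }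
  { rewrite (I3a K d pinf o Hq Ho y x Py), (I3b K d pinf o Hq Ho y x Py); auto. }
  rewrite (I2 K d pinf o Hq Ho x y), (I2 K d pinf o Hq Ho y x); auto.
  rewrite (dr_sym K d pinf Hq x y). f_equal. f_equal. ring.
Qed.

Lemma inv_qt {X : Type} K (d : X -> X -> Rbar) pinf o (Hq : is_quasi_metric K d pinf)
  (Ho : pinf <> Some o) x y z a b :
  Rbar_le (involution d pinf o x z) (Finite a) ->
  Rbar_le (involution d pinf o z y) (Finite b) ->
  Rbar_le (involution d pinf o x y) (Finite (K * K * Rmax a b)).
Proof.
  intros H1 H2.
  assert (HK : 1 <= K) by apply Hq.
  pose proof (rb_nn _ _ (inv_nn K d pinf o Hq Ho x z) H1) as Ha.
  pose proof (rb_nn _ _ (inv_nn K d pinf o Hq Ho z y) H2) as Hb.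
  assert (Hm : 0 <= Rmax a b) by (eapply Rle_trans; [exact Ha|apply Rmax_l]).
  assert (HKK : 1 <= K * K) by nra.
  destruct (classic (x = y)) as [<-|hxy]. { rewrite I1. simpl. nra. }
  destruct (classic (x = z)) as [<-|hxz].
  { apply le_fin with b; auto. assert (b <= Rmax a b) by apply Rmax_r. nra. }
  destruct (classic (z = y)) as [<-|hzy].
  { apply le_fin with a; auto. assert (a <= Rmax a b) by apply Rmax_l. nra. }
  destruct (classic (x = o)) as [->|hxo].
  { rewrite (I4b K d pinf o Hq Ho z) in H1; [simpl in H1; contradiction|auto]. }
  destruct (classic (z = o)) as [->|hzo].
  { rewrite (I4a K d pinf o Hq Ho x) in H1; [simpl in H1; contradiction|auto]. }
  destruct (classic (y = o)) as [->|hyo].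
  { rewrite (I4a K d pinf o Hq Ho z) in H2; [simpl in H2; contradiction|auto]. }
  destruct (classic (pinf = Some x)) as [Px|hx].
  { assert (hz : pinf <> Some z) by (apply fin_of with x; auto).
    assert (hy : pinf <> Some y) by (apply fin_of with x; auto).
    rewrite (I3a K d pinf o Hq Ho x z Px) in H1; auto.
    rewrite (I2 K d pinf o Hq Ho z y) in H2; auto.
    rewrite (I3a K d pinf o Hq Ho x y Px); auto. simpl in *.
    pose proof (dr_pos K d pinf Hq y o hy Ho hyo).
    pose proof (dr_pos K d pinf Hq z o hz Ho hzo).
    pose proof (dr_nn K d pinf Hq z y hz hy).
    eapply (fin_goal K (K * K)); [split; [lra|nra]| exact Hm | | exact H1 | exact H2].
    apply RB; auto.
    pose proof (dr_qt K d pinf Hq z o y hz Ho hy) as Q. exact Q. }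
  destruct (classic (pinf = Some y)) as [Py|hy].
  { assert (hz : pinf <> Some z) by (apply fin_of with y; auto).
    rewrite (I2 K d pinf o Hq Ho x z) in H1; auto.
    rewrite (I3b K d pinf o Hq Ho y z Py) in H2; auto.
    rewrite (I3b K d pinf o Hq Ho y x Py); auto. simpl in *.
    pose proof (dr_pos K d pinf Hq x o hx Ho hxo).
    pose proof (dr_pos K d pinf Hq z o hz Ho hzo).
    pose proof (dr_nn K d pinf Hq x z hx hz).
    eapply (fin_goal K (K * K)); [split; [lra|nra]| exact Hm | | exact H1 | exact H2].
    pose proof (RB K (real (d x z)) (real (d x o)) (real (d z o)) HK) as R.
    rewrite Rmax_comm. replace (real (d x z) / (real (d x o) * real (d z o)))
      with (real (d x z) / (real (d z o) * real (d x o))) by (f_equal; ring).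
    apply R; auto.
    pose proof (dr_qt K d pinf Hq z o x hz Ho hx) as Q.
    rewrite (dr_sym K d pinf Hq z x) in Q. exact Q. }
  destruct (classic (pinf = Some z)) as [Pz|hz].
  { rewrite (I3b K d pinf o Hq Ho z x Pz) in H1; auto.
    rewrite (I3a K d pinf o Hq Ho z y Pz) in H2; auto.
    rewrite (I2 K d pinf o Hq Ho x y); auto. simpl in *.
    pose proof (dr_pos K d pinf Hq x o hx Ho hxo).
    pose proof (dr_pos K d pinf Hq y o hy Ho hyo).
    pose proof (dr_nn K d pinf Hq x y hx hy).
    eapply (fin_goal K (K * K)); [split; [lra|nra]| exact Hm | | exact H1 | exact H2].
    apply RD; auto.
    pose proof (dr_qt K d pinf Hq x y o hx hy Ho) as Q.
    rewrite (dr_sym K d pinf Hq o y) in Q. exact Q. }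
  rewrite (I2 K d pinf o Hq Ho x z) in H1; auto.
  rewrite (I2 K d pinf o Hq Ho z y) in H2; auto.
  rewrite (I2 K d pinf o Hq Ho x y); auto. simpl in *.
  pose proof (dr_pos K d pinf Hq x o hx Ho hxo).
  pose proof (dr_pos K d pinf Hq y o hy Ho hyo).
  pose proof (dr_pos K d pinf Hq z o hz Ho hzo).
  pose proof (dr_nn K d pinf Hq x y hx hy).
  pose proof (dr_nn K d pinf Hq x z hx hz).
  pose proof (dr_nn K d pinf Hq z y hz hy).
  eapply (fin_goal (K * K) (K * K)); [split; [nra|apply Rle_refl]| exact Hm | | exact H1 | exact H2].
  apply RA; auto.
  - apply (dr_qt K d pinf Hq x y z); auto.
  - pose proof (dr_qt K d pinf Hq x y o hx hy Ho) as Q.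
    rewrite (dr_sym K d pinf Hq o y) in Q. exact Q.
  - pose proof (dr_qt K d pinf Hq z o x hz Ho hx) as Q.
    rewrite (dr_sym K d pinf Hq z x) in Q. exact Q.
  - pose proof (dr_qt K d pinf Hq z o y hz Ho hy) as Q. exact Q.
Qed.

Lemma some_ne {X : Type} (o x : X) : Some o <> Some x -> x <> o.
Proof. intros H ->. auto. Qed.

Lemma GH_fwd {X : Type} K (d : X -> X -> Rbar) pinf o (Hq : is_quasi_metric K d pinf)
  (Ho : pinf <> Some o) :
  GH d (involution d pinf o) pinf (Some o) (fun x => real (d x o)) K (K * K).
Proof.
  assert (HK : 1 <= K) by apply Hq.
  constructor.
  - exact HK.
  - nra.
  - apply (inv_sym K d pinf o Hq Ho).
  - intros; apply I1.
  - intros x y z a b; apply (inv_qt K d pinf o Hq Ho).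
  - intros x hx hox. apply (dr_pos K d pinf Hq); auto. apply some_ne; auto.
  - intros x y hx hox hy hoy a. apply some_ne in hox. apply some_ne in hoy.
    pose proof (dr_pos K d pinf Hq x o hx Ho hox).
    pose proof (dr_pos K d pinf Hq y o hy Ho hoy).
    destruct (classic (x = y)) as [<-|hxy].
    + rewrite I1, (d_diag K d pinf Hq). simpl.
      assert (P : 0 < real (d x o) * real (d x o)) by nra. rewrite Rmult_assoc.
      split; intro Hh; [apply Rmult_le_pos; lra|].
      destruct (Rle_dec 0 a) as [|Hn]; auto. exfalso.
      assert (a * (real (d x o) * real (d x o)) < 0) by (apply Rmult_neg_pos; lra). lra.
    + rewrite (I2 K d pinf o Hq Ho x y), (d_fin K d pinf Hq x y); auto. simpl.
      apply div_le_iff; auto.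
  - intros q x Hq1 hx hox a. apply some_ne in hox.
    rewrite (I3b K d pinf o Hq Ho q x Hq1); auto.
    + simpl. reflexivity.
    + intros ->. auto.
  - intros x y hx hox hy hoy. rewrite (d_fin K d pinf Hq x y); auto. simpl.
    pose proof (dr_qt K d pinf Hq x y o hx hy Ho) as Q.
    rewrite (dr_sym K d pinf Hq o y) in Q. exact Q.
  - intros x y hx hox hy hoy a H. rewrite (d_fin K d pinf Hq x y) in H; auto. simpl in H.
    pose proof (dr_qt K d pinf Hq x o y hx Ho hy) as Q.
    eapply Rle_trans; [exact Q|]. apply Rmult_le_compat_l; [lra|].
    apply Rmax_le_compat; lra.
Qed.

Lemma GH_rev {X : Type} K (d : X -> X -> Rbar) pinf o (Hq : is_quasi_metric K d pinf)
  (Ho : pinf <> Some o) :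
  GH (involution d pinf o) d (Some o) pinf (fun x => / real (d x o)) K K.
Proof.
  assert (HK : 1 <= K) by apply Hq.
  constructor.
  - exact HK.
  - exact HK.
  - apply Hq.
  - intros; apply (d_diag K d pinf Hq).
  - intros x y z a b; apply (d_qt_fin K d pinf Hq).
  - intros x hox hx. apply some_ne in hox. apply Rinv_0_lt_compat.
    apply (dr_pos K d pinf Hq); auto.
  - intros x y hox hx hoy hy a. apply some_ne in hox. apply some_ne in hoy.
    pose proof (dr_pos K d pinf Hq x o hx Ho hox).
    pose proof (dr_pos K d pinf Hq y o hy Ho hoy).
    destruct (classic (x = y)) as [<-|hxy].
    + rewrite I1, (d_diag K d pinf Hq). simpl.
      assert (0 < / real (d x o)) by (apply Rinv_0_lt_compat; lra).
      assert (P : 0 < / real (d x o) * / real (d x o)) by nra. rewrite Rmult_assoc.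
      split; intro Hh; [apply Rmult_le_pos; lra|].
      destruct (Rle_dec 0 a) as [|Hn]; auto. exfalso.
      assert (a * (/ real (d x o) * / real (d x o)) < 0) by (apply Rmult_neg_pos; lra). lra.
    + rewrite (I2 K d pinf o Hq Ho x y), (d_fin K d pinf Hq x y); auto. simpl.
      rewrite div_le_iff; auto.
      replace (a * / real (d x o) * / real (d y o) * real (d x o) * real (d y o)) with a
        by (field; lra).
      reflexivity.
  - intros q x Eq hox hx a. injection Eq as <-. apply some_ne in hox.
    rewrite (d_fin K d pinf Hq x o); auto. simpl.
    pose proof (dr_pos K d pinf Hq x o hx Ho hox).
    rewrite Rinv_inv. reflexivity.
  - intros x y hox hx hoy hy. apply some_ne in hox. apply some_ne in hoy.
    pose proof (dr_pos K d pinf Hq x o hx Ho hox).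
    pose proof (dr_pos K d pinf Hq y o hy Ho hoy).
    destruct (classic (x = y)) as [<-|hxy].
    + rewrite I1. simpl. rewrite Rmax_left; [|lra].
      assert (0 < / real (d x o)) by (apply Rinv_0_lt_compat; lra). nra.
    + rewrite (I2 K d pinf o Hq Ho x y); auto. simpl.
      apply RD; auto. apply (dr_nn K d pinf Hq); auto.
      pose proof (dr_qt K d pinf Hq x y o hx hy Ho) as Q.
      rewrite (dr_sym K d pinf Hq o y) in Q. exact Q.
  - intros x y hox hx hoy hy a H. apply some_ne in hox. apply some_ne in hoy.
    pose proof (dr_pos K d pinf Hq x o hx Ho hox).
    pose proof (dr_pos K d pinf Hq y o hy Ho hoy).
    destruct (classic (x = y)) as [<-|hxy].
    + rewrite I1 in H. simpl in H.
      assert (0 < / real (d x o)) by (apply Rinv_0_lt_compat; lra).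
      assert (/ real (d x o) <= Rmax a (/ real (d x o))) by apply Rmax_r. nra.
    + rewrite (I2 K d pinf o Hq Ho x y) in H; auto. simpl in H.
      apply (RG2 K (real (d x y)) a); auto. apply (dr_nn K d pinf Hq); auto.
      pose proof (dr_qt K d pinf Hq y o x hy Ho hx) as Q.
      rewrite (dr_sym K d pinf Hq y x) in Q. exact Q.
Qed.

Theorem proposition3p2 (X : Type) (K : R) (d : X -> X -> Rbar)
  (pinf : option X) (o : X) :
  is_quasi_metric K d pinf -> pinf <> Some o ->
  nagata_dim d pinf = nagata_dim (involution d pinf o) (Some o).
Proof.
  intros Hq Ho. unfold nagata_dim. apply Glb_Rbar_eqset.
  intros r; split; intros [n0 [E Hadm]]; exists n0; split; auto.
  - exact (G_main _ _ _ _ _ _ _ (GH_fwd K d pinf o Hq Ho) n0 Hadm).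
  - exact (G_main _ _ _ _ _ _ _ (GH_rev K d pinf o Hq Ho) n0 Hadm).
Qed.
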